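(* Let $G$ be a digraph with $n$ vertices. If $G$ has a primitive spanning strict subgraph, then $G$ admits a boolean nilpotent function of class at most $n^2-2n+3$.
   Context: Digraphs may have loops but no multiple arcs; cycles are directed, and a loop is a cycle of length $1$. A digraph is primitive if it is strongly connected and the greatest common divisor of the lengths of its cycles is $1$. A spanning strict subgraph of $G$ is a subgraph with the same vertex set and a proper subset of the arcs. A boolean function on $[n]$ is a map $f:\{0,1\}^n\to\{0,1\}^n$; its (unsigned) interaction graph has an arc $(j,i)$ iff $f_i$ depends essentially on $x_j$, i.e. $f_i(a)\neq f_i(b)$ for some $a,b$ differing only in coordinate $j$. An unsigned digraph $G$ on $[n]$ admits $f$ if the interaction graph of $f$ equals $G$. $f$ is nilpotent if $f^k$ is constant for some $k\geq 0$ ($f^0=\mathrm{id}$); the least such $k$ is its class. *)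

(* Defs.v *)
From mathcomp Require Import all_boot.
Set Implicit Arguments. Unset Strict Implicit. Unset Printing Implicit Defensive.

(* An (unsigned) digraph on [n] = 'I_n, loops allowed, no multiple arcs:
   G j i means there is an arc (j, i). *)
Definition digraph (n : nat) := rel 'I_n.

Definition has_cycle_of_length n (G : digraph n) (k : nat) : bool :=
  [exists t : k.-tuple 'I_n, [&& 0 < k, uniq t & cycle G t]].

Definition strongly_connected n (G : digraph n) : Prop :=
  forall x y : 'I_n, connect G x y.

(* gcd of the lengths of all cycles (every cycle has length <= n). *)
Definition cycle_gcd n (G : digraph n) : nat :=
  \big[gcdn/0]_(k < n.+1 | has_cycle_of_length G k) k.

Definition primitive n (G : digraph n) : Prop :=
  strongly_connected G /\ cycle_gcd G = 1.

Definition spanning_strict_subgraph n (H G : digraph n) : Prop :=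
  (forall j i, H j i -> G j i) /\ (exists j i, G j i /\ ~~ H j i).

Definition config (n : nat) := {ffun 'I_n -> bool}.
Definition boolfun (n : nat) := config n -> config n.

Definition depends n (f : boolfun n) (j i : 'I_n) : Prop :=
  exists a b : config n,
    [/\ forall k, k != j -> a k = b k, a j != b j & f a i != f b i].

Definition admits n (G : digraph n) (f : boolfun n) : Prop :=
  forall j i : 'I_n, G j i <-> depends f j i.

Definition iter_constant n (f : boolfun n) (k : nat) : Prop :=
  exists c : config n, forall x, iter k f x = c.

Definition nilpotent_class_le n (f : boolfun n) (N : nat) : Prop :=
  exists2 k, k <= N & iter_constant f k.

(* Main.v *)
Require Import Defs.
From mathcomp Require Import all_boot.
From mathcomp Require Import zify.
From Stdlib Require Import Classical.

Set Implicit Arguments. Unset Strict Implicit. Unset Printing Implicit Defensive.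

Fixpoint walk (T : finType) (e : rel T) (k : nat) (x y : T) : bool :=
  if k is k'.+1 then [exists z, walk e k' x z && e z y] else x == y.

Lemma walk_cat (T : finType) (e : rel T) a b x y z :
  walk e a x y -> walk e b y z -> walk e (a + b) x z.
Proof.
elim: b z => [|b IH] z Hxy /=.
  by move/eqP=> <-; rewrite addn0.
case/existsP=> z' /andP[Hyz' Hz'z]; rewrite addnS /=.
by apply/existsP; exists z'; rewrite (IH _ Hxy Hyz').
Qed.

Lemma walk_split (T : finType) (e : rel T) a b x z :
  walk e (a + b) x z -> exists2 y, walk e a x y & walk e b y z.
Proof.
elim: b z => [|b IH] z /=.
  by rewrite addn0 => H; exists z.
rewrite addnS /= => /existsP[z' /andP[H1 H2]].
have [y Hxy Hyz'] := IH _ H1.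
by exists y => //; apply/existsP; exists z'; rewrite Hyz'.
Qed.

Lemma walk1 (T : finType) (e : rel T) x y : walk e 1 x y = e x y.
Proof.
apply/existsP/idP => [[z /andP[/eqP -> //]]|H].
by exists x; rewrite eqxx.
Qed.

Lemma walk_sub (T : finType) (e e' : rel T) :
  (forall x y, e x y -> e' x y) -> forall k x y, walk e k x y -> walk e' k x y.
Proof.
move=> He; elim=> [|k IH] x y //=.
case/existsP=> z /andP[H1 H2]; apply/existsP; exists z.
by rewrite (IH _ _ H1) (He _ _ H2).
Qed.

Lemma path_walk (T : finType) (e : rel T) x p :
  path e x p -> walk e (size p) x (last x p).
Proof.
elim: p x => [|y p IH] x; first by rewrite /= eqxx.
move=> /= /andP[Hxy Hp]; change (walk e (1 + size p) x (last y p)).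
by apply: (walk_cat (y := y)); [rewrite walk1 | exact: IH].
Qed.

Lemma connect_walk (T : finType) (e : rel T) x y :
  connect e x y -> exists k, walk e k x y.
Proof. by case/connectP=> p Hp ->; exists (size p); apply: path_walk. Qed.

Lemma cycle_walk (T : finType) (e : rel T) (x : T) p :
  cycle e (x :: p) -> walk e (size p).+1 x x.
Proof.
move=> /= Hp; have := path_walk Hp.
by rewrite size_rcons last_rcons.
Qed.

Lemma grow (T : finType) (F : nat -> {set T}) :
  (forall t, F t \subset F t.+1) ->
  (forall t, F t.+1 \subset F t -> F t = setT) ->
  forall t, F t = setT \/ #|F 0| + t <= #|F t|.
Proof.
move=> mono stuck; elim=> [|t [IH|IH]]; first by right; rewrite addn0.
- left; apply/eqP; rewrite eqEsubset subsetT /= -IH; exact: mono.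
- case: (boolP (F t.+1 \subset F t)) => [sub|nsub].
    left; apply/eqP; rewrite eqEsubset subsetT /= -(stuck t sub); exact: mono.
  right; have : F t \proper F t.+1 by rewrite properE mono nsub.
  move/proper_card=> H; rewrite addnS; exact: leq_ltn_trans IH H.
Qed.

Lemma grow_full (T : finType) (F : nat -> {set T}) :
  (forall t, F t \subset F t.+1) ->
  (forall t, F t.+1 \subset F t -> F t = setT) ->
  forall t, #|T| <= #|F 0| + t -> F t = setT.
Proof.
move=> mono stuck t Ht; case: (grow mono stuck t) => // H.
apply/eqP; rewrite eqEcard subsetT cardsT; exact: leq_trans Ht H.
Qed.

Lemma ex_min_prop (P : nat -> Prop) :
  (exists n, P n) -> exists n, P n /\ forall m, P m -> n <= m.
Proof.
case=> n Pn.
suff: forall N n, n <= N -> P n -> exists n, P n /\ forall m, P m -> n <= m.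
  by move=> H; exact: (H n n).
elim=> [|N IH] k Hk Pk.
  have k0 : k = 0 by lia.
  by subst; exists 0; split.
case: (classic (exists m, m < k /\ P m)) => [[m [Hm Pm]]|Hn].
  by apply: (IH m) => //; lia.
exists k; split => // m Pm; rewrite leqNgt; apply/negP => Hmk.
by apply: Hn; exists m.
Qed.

Lemma dvdn_biggcd (I : finType) (P : pred I) (F : I -> nat) d :
  (forall i, P i -> d %| F i) -> d %| \big[gcdn/0]_(i | P i) F i.
Proof.
move=> H; apply: (big_ind (fun m => d %| m)) => //.
by move=> a b Ha Hb; rewrite dvdn_gcd Ha Hb.
Qed.

Lemma all_res n (H : rel 'I_n) s w :
  strongly_connected H -> cycle_gcd H = 1 -> 0 < s ->
  forall y, exists k, walk H (k * s) w y.
Proof.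
move=> Hsc Hg s0.
pose Q := fun r => exists k, walk H k w w /\ k = r %[mod s].
have Q0 : Q 0 by exists 0; split => //=; rewrite eqxx.
have Qcongr : forall a b, Q a -> a = b %[mod s] -> Q b.
  by move=> a b [k [Hk Hka]] Hab; exists k; split => //; rewrite Hka.
have Qadd : forall a b, Q a -> Q b -> Q (a + b).
  move=> a b [k1 [H1 E1]] [k2 [H2 E2]]; exists (k1 + k2); split.
    exact: walk_cat H1 H2.
  by rewrite -modnDm E1 E2 modnDm.
have Qmul : forall q a, Q a -> Q (q * a).
  elim=> [|q IH] a Ha; first by rewrite mul0n.
  by rewrite mulSn; apply: Qadd => //; apply: IH.
have Qs : Q s by apply: Qcongr Q0 _; rewrite modnn mod0n.
have [d [[d0 [ds Qd]] dmin]] :=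
  ex_min_prop (P := fun r => 0 < r /\ r <= s /\ Q r)
    (ex_intro _ s (conj s0 (conj (leqnn s) Qs))).
have key : forall x, Q x -> x <= s -> d %| x.
  move=> x Qx xs.
  have Ex := divn_eq x d.
  set q := x %/ d in Ex; set rem := x %% d in Ex.
  have Qr : Q rem.
    apply: (Qcongr (x + q * (s - 1) * d)); first by apply: Qadd Qx (Qmul _ _ Qd).
    have -> : x + q * (s - 1) * d = (q * d) * s + rem.
      rewrite {1}Ex; nia.
    by rewrite modnMDl.
  have rd : rem < d by rewrite /rem ltn_mod.
  rewrite /dvdn; apply/eqP; rewrite -/rem.
  case: (posnP rem) => // r0; exfalso.
  have := dmin rem (conj r0 (conj (ltnW (leq_trans rd ds)) Qr)).
  by rewrite leqNgt rd.
have ds' : d %| s := key s Qs (leqnn s).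
have keyr : forall r, Q r -> d %| r.
  move=> r Qr; rewrite /dvdn -(modn_dvdm r ds') -/(dvdn d (r %% s)).
  apply: key; last exact: ltnW (ltn_pmod r s0).
  by apply: Qcongr Qr _; rewrite modn_mod.
have cyc : forall k, has_cycle_of_length H k -> d %| k.
  move=> k /existsP[t /and3P[k0 ut ct]].
  have sz := size_tuple t.
  move: ct sz; case: (tval t) => [|v p] ct sz; first by rewrite -sz in k0.
  have Hc := cycle_walk ct; rewrite /= in sz; rewrite sz in Hc.
  have [l Hl] := connect_walk (Hsc w v).
  have [p' Hp'] := connect_walk (Hsc v w).
  have Q1 : Q (l + p') by exists (l + p'); split => //; exact: walk_cat Hl Hp'.
  have Q2 : Q (l + p' + k).
    exists (l + k + p'); split; first exact: walk_cat (walk_cat Hl Hc) Hp'.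
    by rewrite addnAC.
  by have := keyr _ Q2; rewrite (dvdn_addr _ (keyr _ Q1)).
have d1 : d = 1.
  apply/eqP; rewrite -dvdn1 -Hg /cycle_gcd; apply: dvdn_biggcd => i Hi.
  exact: cyc.
subst d.
move=> y.
have [l Hl] := connect_walk (Hsc w y).
have [k [Hk Ek]] : Q (l * (s - 1)) by rewrite -(muln1 (l * (s - 1))); apply: Qmul.
have Hw := walk_cat Hk Hl.
exists ((k + l) %/ s); rewrite divnK //.
rewrite /dvdn -modnDml Ek modnDml.
have -> : l * (s - 1) + l = l * s.
  by rewrite -{2}(muln1 l) -mulnDr subnK.
by rewrite modnMl.
Qed.

Lemma wielandt n (H : rel 'I_n) : primitive H ->
  exists L, L <= n ^ 2 + 2 - 2 * n /\
    forall k, L <= k -> forall x y, walk H k x y.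
Proof.
case=> Hsc Hg.
have excyc : exists k, has_cycle_of_length H k.
  case: (classic (exists k, has_cycle_of_length H k)) => // Hn; exfalso.
  have : 0 %| cycle_gcd H.
    by apply: dvdn_biggcd => i Hi; exfalso; apply: Hn; exists i.
  by rewrite Hg.
have [s [Hs smin]] := ex_min_prop excyc.
case/existsP: Hs => t /and3P[s0 ut ct].
have sn : s <= n.
  have := max_card (mem (tval t)); rewrite card_ord (card_uniqP ut) size_tuple.
  by [].
have sn1 : s < n \/ n = 1.
  case: (ltnP s n) => [|ns]; [by left|right].
  have sEn : s = n by apply/eqP; rewrite eqn_leq sn ns.
  have : n %| cycle_gcd H.
    apply: dvdn_biggcd => i Hi.
    have := smin i Hi; have := ltn_ord i; rewrite sEn => h1 h2.
    have -> : (i : nat) = n by apply/eqP; rewrite eqn_leq h2 -ltnS h1.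
    by [].
  by rewrite Hg dvdn1 => /eqP.
have Cw c : c \in tval t -> walk H s c c.
  case/rot_to => i p Hrot.
  have : cycle H (c :: p) by rewrite -Hrot rot_cycle.
  move/cycle_walk.
  have : size (c :: p) = s by rewrite -Hrot size_rot size_tuple.
  by move=> /= <-.
have Cnext c : c \in tval t -> forall r, exists2 c', c' \in tval t & walk H r c c'.
  move=> Hc; elim=> [|r [c' Hc' Hw]]; first by exists c => //=.
  exists (next t c'); first by rewrite mem_next.
  by rewrite /=; apply/existsP; exists c'; rewrite Hw (next_cycle ct Hc').
have n0 : 0 < n.
  have : 0 < size (tval t) by rewrite size_tuple.
  case E: (tval t) => [|v p] // _.
  exact: leq_ltn_trans (leq0n v) (ltn_ord v).
have P2 c : c \in tval t -> forall y, walk H ((n - 1) * s) c y.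
  move=> Hc y.
  pose F := fun u => [set y | walk H (u * s) c y].
  have Fc : forall u, walk H (u * s) c c.
    elim=> [|u IH]; first by rewrite /= eqxx.
    by rewrite mulSn; exact: walk_cat (Cw c Hc) IH.
  have mono : forall u, F u \subset F u.+1.
    move=> u; apply/subsetP => z; rewrite !inE mulSn => Hz.
    exact: walk_cat (Cw c Hc) Hz.
  have stuck : forall u, F u.+1 \subset F u -> F u = setT.
    move=> u Hsub; apply/setP => z; rewrite in_setT.
    have [k Hk] := @all_res _ _ s c Hsc Hg s0 z.
    elim: k z Hk => [|k IH] z Hk.
      by rewrite mul0n /= in Hk; rewrite -(eqP Hk) inE; apply: Fc.
    rewrite mulSn addnC in Hk; have [z' H1 H2] := walk_split Hk.
    have := IH _ H1; rewrite inE => Hz'.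
    apply: (subsetP Hsub); rewrite inE mulSn addnC.
    exact: walk_cat Hz' H2.
  have := grow_full mono stuck (t := n - 1).
  have c0 : c \in F 0 by rewrite inE /= eqxx.
  have : 0 < #|F 0| by apply/card_gt0P; exists c.
  move=> h1 h2.
  have E : F (n - 1) = setT by apply: h2; rewrite card_ord; lia.
  have : y \in F (n - 1) by rewrite E in_setT.
  by rewrite inE.
have [c0 Hc0] : exists c0, c0 \in tval t.
  have : 0 < size (tval t) by rewrite size_tuple.
  case E: (tval t) => [|v p] // _; exists v; exact: mem_head.
have P1 x : exists2 m, m <= n - s & exists2 c, c \in tval t & walk H m x c.
  pose F := fun u => [set x | [exists m : 'I_u.+1,
                      [exists c, (c \in tval t) && walk H m x c]]].
  have mono : forall u, F u \subset F u.+1.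
    move=> u; apply/subsetP => z; rewrite !inE => /existsP[m /existsP[c /andP[h1 h2]]].
    apply/existsP; exists (widen_ord (leqnSn _) m); apply/existsP; exists c.
    by rewrite h1.
  have stuck : forall u, F u.+1 \subset F u -> F u = setT.
    move=> u Hsub; apply/setP => z; rewrite in_setT.
    have [k Hk] := connect_walk (Hsc z c0).
    elim: k z Hk => [|k IH] z Hk.
      rewrite /= in Hk; rewrite (eqP Hk) inE; apply/existsP; exists ord0.
      by apply/existsP; exists c0; rewrite Hc0 /= eqxx.
    rewrite -add1n in Hk; have [z' H1 H2] := walk_split Hk.
    have := IH _ H2; rewrite inE => /existsP[m /existsP[c /andP[hc hw]]].
    apply: (subsetP Hsub); rewrite inE; apply/existsP.
    have hm : 1 + m < u.+2 by rewrite add1n ltnS ltn_ord.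
    exists (Ordinal hm); apply/existsP; exists c; rewrite hc /=.
    exact: walk_cat H1 hw.
  have hF0 : s <= #|F 0|.
    have : #|[set x in tval t]| <= #|F 0|.
      apply: subset_leq_card; apply/subsetP => z; rewrite !inE => hz.
      by apply/existsP; exists ord0; apply/existsP; exists z; rewrite hz /= eqxx.
    by rewrite cardsE (card_uniqP ut) size_tuple.
  have E : F (n - s) = setT by apply: grow_full => //; rewrite card_ord; lia.
  have : x \in F (n - s) by rewrite E in_setT.
  rewrite inE => /existsP[m /existsP[c /andP[hc hw]]].
  by exists m; [rewrite -ltnS ltn_ord | exists c].
exists ((n - s) + (n - 1) * s); split.
  case: sn1 => [lt|e1]; first by nia.
  subst n; have -> : s = 1 by lia.
  by [].
move=> k Hk x y.
have [m hm [c hc hw]] := P1 x.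
have [c' hc' hw'] := Cnext c hc (k - (n - 1) * s - m).
have := walk_cat (walk_cat hw hw') (P2 c' hc' y).
set P := (n - 1) * s.
have -> // : m + (k - P - m) + P = k by rewrite /P in Hk *; lia.
Qed.

Definition Gm n (G : rel 'I_n) (j0 i0 : 'I_n) : rel 'I_n :=
  fun j i => G j i && ((j != j0) || (i != i0)).

Definition nilf n (G : rel 'I_n) (j0 i0 : 'I_n) : boolfun n :=
  fun x => [ffun i => [forall j, Gm G j0 i0 j i ==> x j] && ((i == i0) ==> ~~ x j0)].

Lemma nilf_walk n (G : rel 'I_n) j0 i0 k x i :
  iter k (nilf G j0 i0) x i -> forall j, walk (Gm G j0 i0) k j i -> x j.
Proof.
elim: k i => [|k IH] i /=; first by move=> Hi j /eqP ->.
rewrite /nilf ffunE => /andP[/forallP Hf _] j /existsP[z /andP[Hw Hz]].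
apply: (IH z) => //; exact: (implyP (Hf z)).
Qed.

Theorem proposition7 (n : nat) (G : digraph n) :
  (exists H : digraph n, spanning_strict_subgraph H G /\ primitive H) ->
  exists f : boolfun n, admits G f /\ nilpotent_class_le f (n ^ 2 + 3 - 2 * n).
Proof.
move=> [H [[Hsub [j0 [i0 [Gji Hnji]]]] Hprim]].
have HG' : forall j i, H j i -> Gm G j0 i0 j i.
  move=> j i Hji; rewrite /Gm (Hsub _ _ Hji) /=.
  case: (boolP (j == j0)) => [/eqP Ej|] //=; case: (boolP (i == i0)) => [/eqP Ei|] //=.
  by subst; rewrite Hji in Hnji.
have [L [HL Lw]] := wielandt Hprim.
exists (nilf G j0 i0); split.
  move=> j i; split.
  - move=> Gji'.
    pose base : config n := [ffun k => (i == i0) ==> (k != j0)].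
    pose a : config n := [ffun k => if k == j then true else base k].
    pose b : config n := [ffun k => if k == j then false else base k].
    exists a, b; split.
    + by move=> k hk; rewrite !ffunE (negbTE hk).
    + by rewrite !ffunE eqxx.
    + rewrite /nilf !ffunE.
      case: (boolP ((j == j0) && (i == i0))) => [/andP[/eqP Ej /eqP Ei]|hne].
        subst j i.
        have fa : ((i0 == i0) ==> ~~ a j0) = false by rewrite eqxx /a ffunE eqxx.
        have fb : [forall j', Gm G j0 i0 j' i0 ==> b j'].
          apply/forallP => j'; apply/implyP => /andP[_]; rewrite eqxx orbF => hj.
          by rewrite /b ffunE (negbTE hj) /base ffunE eqxx hj.
        have fb2 : ((i0 == i0) ==> ~~ b j0) by rewrite eqxx /b ffunE eqxx.
        by rewrite !eqxx /= andbF andbT fb.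
      have G'ji : Gm G j0 i0 j i.
        by rewrite /Gm Gji' /=; move: hne; rewrite negb_and.
      have fb : [forall j', Gm G j0 i0 j' i ==> b j'] = false.
        apply/negbTE/forallP => /(_ j); rewrite G'ji /b ffunE eqxx.
        by [].
      have fa : [forall j', Gm G j0 i0 j' i ==> a j'].
        apply/forallP => j'; apply/implyP => hj'.
        rewrite /a ffunE; case: eqP => // /eqP nj'.
        rewrite /base ffunE; apply/implyP => /eqP Ei; subst i.
        by move: hj'; rewrite /Gm eqxx orbF => /andP[].
      have fa2 : ((i == i0) ==> ~~ a j0).
        apply/implyP => /eqP Ei; subst i.
        have nj : j0 != j by move: hne; rewrite eqxx andbT eq_sym.
        by rewrite /a ffunE (negbTE nj) /base ffunE !eqxx.
      move: fa2; rewrite /a ffunE /base ffunE => fa2.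
      by rewrite fa fa2 fb.
  - case=> a [b [Hab _ Hf]].
    apply: contraTT Hf => nG; rewrite negbK; apply/eqP.
    rewrite /nilf !ffunE; congr (_ && _).
      apply: eq_forallb => j'.
      case: (boolP (Gm G j0 i0 j' i)) => //= hG; apply: Hab.
      apply/eqP => Ej; subst j'; move: hG; rewrite /Gm => /andP[hG _].
      by rewrite hG in nG.
    case: (boolP (i == i0)) => //= /eqP Ei; subst i; rewrite Hab //.
    by apply/eqP => Ej; subst j; rewrite Gji in nG.
exists L.+1.
  have : 2 * n <= n ^ 2 + 2 by nia.
  by lia.
exists [ffun => false].
have zero : forall y : config n, (exists j, y j = false) -> forall k, L <= k ->
    iter k (nilf G j0 i0) y = [ffun => false].
  move=> y [j Hj] k Hk; apply/ffunP => i; rewrite ffunE.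
  apply/negbTE/negP => Hi.
  have := nilf_walk Hi (walk_sub HG' (Lw k Hk j i)).
  by rewrite Hj.
move=> x.
case: (boolP [exists j, ~~ x j]) => [/existsP[j Hj]|Hall].
  by apply: zero => //; exists j; apply/negbTE.
rewrite iterSr; apply: zero (leqnn _).
exists i0; rewrite /nilf ffunE eqxx /=.
move: Hall; rewrite negb_exists => /forallP /(_ j0); rewrite negbK => ->.
by rewrite andbF.
Qed.
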